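(* The $G$-invariant functions $p_1,\dots,p_5$ on $\mathscr X_2$ given by $p_1(v,w,C)=\langle v,v\rangle$, $p_2(v,w,C)=\langle w,w\rangle$, $p_3(v,w,C)=\langle Cv,w\rangle$, $p_4(v,w,C)=\operatorname{tr}(C^tC)$, $p_5(v,w,C)=\det C$ separate orbits in general position.
   Context: Identify $V_1=V_2=\mathbb C^2$ with Pauli matrices $\sigma_1=\begin{pmatrix}0&1\\1&0\end{pmatrix}$, $\sigma_2=\begin{pmatrix}0&-i\\i&0\end{pmatrix}$, $\sigma_3=\begin{pmatrix}1&0\\0&-1\end{pmatrix}$. Trace-one endomorphisms of $\mathbb C^2\otimes\mathbb C^2$ are written uniquely as $\tfrac14\big(I\otimes I+\sum_a v_a\sigma_a\otimes I+\sum_b w_bI\otimes\sigma_b+\sum_{a,b}C_{ba}\sigma_a\otimes\sigma_b\big)$, giving coordinates $(v,w,C)\in\mathbb C^3\times\mathbb C^3\times M_3(\mathbb C)$ on the space $\mathscr L_2$; $G=\mathrm{SO}_3(\mathbb C)^2$ acts by $(g_1,g_2)\cdot(v,w,C)=(g_1v,g_2w,g_2Cg_1^{-1})$. $\langle x,y\rangle=\sum_a x_ay_a$ on $\mathbb C^3$. Let $X_0$ be the subspace with $v_1=v_2=w_1=w_2=0$ and $C_{ba}=0$ whenever exactly one of $a,b$ equals $3$; $\mathscr X_2$ is the Zariski closure of $G\cdot X_0$ (equivalently of the set of two-qubit X-states), with reduced structure. A collection $f_1,\dots,f_m$ of $G$-invariant rational functions on a $G$-variety $X$ separates orbits in general position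 if there is a dense Zariski-open $U\subseteq X$ such that any $x_1,x_2\in U$ with $f_i(x_1)=f_i(x_2)$ for all $i$ lie in the same $G$-orbit. *)

(* Defs.v *)
From HB Require Import structures.
From mathcomp Require Import all_boot all_order all_algebra.
From mathcomp Require Import complex.
From mathcomp Require Import reals.
From mathcomp Require mpoly.
Set Implicit Arguments. Unset Strict Implicit. Unset Printing Implicit Defensive.
Import Order.TTheory GRing.Theory Num.Theory.
Local Open Scope ring_scope.

Section Defs.
Variable R : realType.
Local Notation C := (complex R).

Definition pt := ('cV[C]_3 * 'cV[C]_3 * 'M[C]_3)%type.
Definition pv (x : pt) := x.1.1.
Definition pw (x : pt) := x.1.2.
Definition pC (x : pt) := x.2.

Definition coords (x : pt) (i : 'I_15) : C :=
  if (i < 3)%N then pv x (inord i) 0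
  else if (i < 6)%N then pw x (inord (i - 3)) 0
  else pC x (inord ((i - 6) %/ 3)) (inord ((i - 6) %% 3)).

Definition zariski_closed (Z : pt -> Prop) : Prop :=
  exists P : mpoly.mpoly 15 C -> Prop,
    forall x, Z x <-> (forall p, P p -> mpoly.meval (coords x) p = 0).

Definition zclosure (S : pt -> Prop) (x : pt) : Prop :=
  forall Z, zariski_closed Z -> (forall y, S y -> Z y) -> Z x.

Definition SO3 (g : 'M[C]_3) : Prop := g^T *m g = 1%:M /\ \det g = 1.
Definition inG (g : 'M[C]_3 * 'M[C]_3) : Prop := SO3 g.1 /\ SO3 g.2.

Definition act (g : 'M[C]_3 * 'M[C]_3) (x : pt) : pt :=
  (g.1 *m pv x, g.2 *m pw x, g.2 *m pC x *m invmx g.1).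

Definition bil (x y : 'cV[C]_3) : C := \sum_(a < 3) x a 0 * y a 0.

(* X_0 (indices 0,1,2 stand for 1,2,3) *)
Definition X0 (x : pt) : Prop :=
  pv x 0 0 = 0 /\ pv x 1 0 = 0 /\ pw x 0 0 = 0 /\ pw x 1 0 = 0 /\
  (forall a b : 'I_3, ((a == 2 :> nat) != (b == 2 :> nat)) -> pC x b a = 0).

Definition X2 : pt -> Prop :=
  zclosure (fun y => exists g x, inG g /\ X0 x /\ y = act g x).

Definition pinv (i : 'I_5) (x : pt) : C :=
  match val i with
  | 0 => bil (pv x) (pv x)
  | 1 => bil (pw x) (pw x)
  | 2 => bil (pC x *m pv x) (pw x)
  | 3 => \tr ((pC x)^T *m pC x)
  | _ => \det (pC x)
  end.

(* A family f of G-invariant functions on a G-stable X separates orbits in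
   general position: there is a dense Zariski-open U of X (U = X minus a
   Zariski-closed Z, with X contained in the closure of U) on which equal
   values of all f_i imply being in the same G-orbit. *)
Definition separates_orbits_gp (n : nat) (f : 'I_n -> pt -> C)
  (X : pt -> Prop) : Prop :=
  exists Z : pt -> Prop, zariski_closed Z /\
    (forall x, X x -> zclosure (fun y => X y /\ ~ Z y) x) /\
    (forall x1 x2, X x1 -> ~ Z x1 -> X x2 -> ~ Z x2 ->
       (forall i, f i x1 = f i x2) -> exists g, inG g /\ act g x1 = x2).

Definition G_invariant_on (n : nat) (f : 'I_n -> pt -> C) (X : pt -> Prop) :=
  forall g x i, inG g -> X x -> f i (act g x) = f i x.
End Defs.

(* Main.v *)
Require Import Defs.
From mathcomp Require Import all_boot all_algebra complex reals ring.
From mathcomp Require Import mpoly.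
Set Implicit Arguments. Unset Strict Implicit. Unset Printing Implicit Defensive.
Import GRing.Theory Num.Theory.
Local Open Scope ring_scope.

Lemma ord3P (i : 'I_3) : i = 0 \/ i = 1 \/ i = 2.
Proof.
case: i => [[|[|[|//]]] Hi]; [left|right;left|right;right]; exact: val_inj.
Qed.

Lemma sum3 (T : nmodType) (F : 'I_3 -> T) : \sum_(i < 3) F i = F 0 + F 1 + F 2.
Proof.
rewrite !big_ord_recl big_ord0 addr0 addrA; congr (F _ + F _ + F _); exact: val_inj.
Qed.

Lemma ord1E (j : 'I_1) : j = 0. Proof. exact: ord1. Qed.

Lemma forall3 (P : 'I_3 -> Prop) : P 0 -> P 1 -> P 2 -> forall i, P i.
Proof. by move=> ? ? ? i; case: (ord3P i) => [->|[->|->]]. Qed.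
Lemma forall1 (P : 'I_1 -> Prop) : P 0 -> forall i, P i.
Proof. by move=> ? i; rewrite (ord1E i). Qed.
Fact mk3_key : unit. Proof. exact: tt. Qed.
Fact cv3_key : unit. Proof. exact: tt. Qed.
Section Gen.
Variable T : comNzRingType.
Definition mk3 (a00 a01 a02 a10 a11 a12 a20 a21 a22 : T) : 'M[T]_3 :=
  \matrix[mk3_key]_(i, j) nth 0 (nth [::] [:: [:: a00; a01; a02]; [:: a10; a11; a12];
                                    [:: a20; a21; a22]] i) j.
Definition cv3 (a0 a1 a2 : T) : 'cV[T]_3 := \matrix[cv3_key]_(i, j) nth 0 [:: a0; a1; a2] i.
Definition gbil (x y : 'cV[T]_3) : T := \sum_(a < 3) x a 0 * y a 0.
Definition gpinv (i : 'I_5) (v w : 'cV[T]_3) (M : 'M[T]_3) : T :=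
  match val i with
  | 0 => gbil v v
  | 1 => gbil w w
  | 2 => gbil (M *m v) w
  | 3 => \tr (M^T *m M)
  | _ => \det M
  end.
Definition gE1 (v w : 'cV[T]_3) (M : 'M[T]_3) : 'cV[T]_3 :=
  gbil w w *: (M *m v) - gbil (M *m v) w *: w.
Definition gE2 (v w : 'cV[T]_3) (M : 'M[T]_3) : 'cV[T]_3 :=
  gbil v v *: (M^T *m w) - gbil (M *m v) w *: v.
Definition gH (v w : 'cV[T]_3) (M : 'M[T]_3) : T :=
  let p0 := gpinv 0 v w M in let p1 := gpinv 1 v w M in
  let p2 := gpinv 2 v w M in let p3 := gpinv 3 v w M in
  let p4 := gpinv 4 v w M in
  p0 * p1 * p2 * (p2 ^+ 2 * (p0 * p1 * p3 - p2 ^+ 2) ^+ 2 - 4%:R * p4 ^+ 2 * (p0 * p1) ^+ 3).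

Lemma det3 (A : 'M[T]_3) : \det A =
  A 0 0 * A 1 1 * A 2 2 - A 0 0 * A 1 2 * A 2 1 - A 0 1 * A 1 0 * A 2 2
  + A 0 1 * A 1 2 * A 2 0 + A 0 2 * A 1 0 * A 2 1 - A 0 2 * A 1 1 * A 2 0.
Proof.
pose F (i j : nat) := A (inord i) (inord j).
have -> : A = \matrix_(i,j) F i j by apply/matrixP=> i j; rewrite mxE /F !inord_val.
rewrite (expand_det_row _ 0) !big_ord_recr big_ord0 /=.
rewrite /cofactor !(expand_det_row _ 0) !big_ord_recr !big_ord0 /=.
rewrite /cofactor !det_mx11 !mxE /= /bump /= !expr0 !expr1 /=. ring.
Qed.

Lemma mulmx3E m n (A : 'M[T]_(m,3)) (B : 'M[T]_(3,n)) i j :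
  (A *m B) i j = A i 0 * B 0 j + A i 1 * B 1 j + A i 2 * B 2 j.
Proof. by rewrite mxE sum3. Qed.

Lemma tr3E (A : 'M[T]_3) : \tr A = A 0 0 + A 1 1 + A 2 2.
Proof. by rewrite /mxtrace sum3. Qed.

Lemma gbilE x y : gbil x y = x 0 0 * y 0 0 + x 1 0 * y 1 0 + x 2 0 * y 2 0.
Proof. by rewrite /gbil sum3. Qed.

Lemma gbil_mx x y : gbil x y = (x^T *m y) 0 0.
Proof. by rewrite mxE /gbil; apply: eq_bigr => a _; rewrite mxE. Qed.

Lemma gbil_orth (g : 'M[T]_3) x y : g^T *m g = 1%:M -> gbil (g *m x) (g *m y) = gbil x y.
Proof. by move=> H; rewrite !gbil_mx trmx_mul -mulmxA (mulmxA g^T) H mul1mx. Qed.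

Lemma gbilC x y : gbil x y = gbil y x.
Proof. by rewrite /gbil; apply: eq_bigr => a _; rewrite mulrC. Qed.


Lemma mk3_00 a00 a01 a02 a10 a11 a12 a20 a21 a22 : (mk3 a00 a01 a02 a10 a11 a12 a20 a21 a22) 0 0 = a00.
Proof. by rewrite mxE. Qed.
Lemma id3_00 : (1%:M : 'M[T]_3) 0 0 = 1.
Proof. by rewrite mxE. Qed.
Lemma mk3_01 a00 a01 a02 a10 a11 a12 a20 a21 a22 : (mk3 a00 a01 a02 a10 a11 a12 a20 a21 a22) 0 1 = a01.
Proof. by rewrite mxE. Qed.
Lemma id3_01 : (1%:M : 'M[T]_3) 0 1 = 0.
Proof. by rewrite mxE. Qed.
Lemma mk3_02 a00 a01 a02 a10 a11 a12 a20 a21 a22 : (mk3 a00 a01 a02 a10 a11 a12 a20 a21 a22) 0 2 = a02.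
Proof. by rewrite mxE. Qed.
Lemma id3_02 : (1%:M : 'M[T]_3) 0 2 = 0.
Proof. by rewrite mxE. Qed.
Lemma mk3_10 a00 a01 a02 a10 a11 a12 a20 a21 a22 : (mk3 a00 a01 a02 a10 a11 a12 a20 a21 a22) 1 0 = a10.
Proof. by rewrite mxE. Qed.
Lemma id3_10 : (1%:M : 'M[T]_3) 1 0 = 0.
Proof. by rewrite mxE. Qed.
Lemma mk3_11 a00 a01 a02 a10 a11 a12 a20 a21 a22 : (mk3 a00 a01 a02 a10 a11 a12 a20 a21 a22) 1 1 = a11.
Proof. by rewrite mxE. Qed.
Lemma id3_11 : (1%:M : 'M[T]_3) 1 1 = 1.
Proof. by rewrite mxE. Qed.
Lemma mk3_12 a00 a01 a02 a10 a11 a12 a20 a21 a22 : (mk3 a00 a01 a02 a10 a11 a12 a20 a21 a22) 1 2 = a12.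
Proof. by rewrite mxE. Qed.
Lemma id3_12 : (1%:M : 'M[T]_3) 1 2 = 0.
Proof. by rewrite mxE. Qed.
Lemma mk3_20 a00 a01 a02 a10 a11 a12 a20 a21 a22 : (mk3 a00 a01 a02 a10 a11 a12 a20 a21 a22) 2 0 = a20.
Proof. by rewrite mxE. Qed.
Lemma id3_20 : (1%:M : 'M[T]_3) 2 0 = 0.
Proof. by rewrite mxE. Qed.
Lemma mk3_21 a00 a01 a02 a10 a11 a12 a20 a21 a22 : (mk3 a00 a01 a02 a10 a11 a12 a20 a21 a22) 2 1 = a21.
Proof. by rewrite mxE. Qed.
Lemma id3_21 : (1%:M : 'M[T]_3) 2 1 = 0.
Proof. by rewrite mxE. Qed.
Lemma mk3_22 a00 a01 a02 a10 a11 a12 a20 a21 a22 : (mk3 a00 a01 a02 a10 a11 a12 a20 a21 a22) 2 2 = a22.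
Proof. by rewrite mxE. Qed.
Lemma id3_22 : (1%:M : 'M[T]_3) 2 2 = 1.
Proof. by rewrite mxE. Qed.
Lemma cv3_0 a0 a1 a2 : (cv3 a0 a1 a2) 0 0 = a0.
Proof. by rewrite mxE. Qed.
Lemma cv3_1 a0 a1 a2 : (cv3 a0 a1 a2) 1 0 = a1.
Proof. by rewrite mxE. Qed.
Lemma cv3_2 a0 a1 a2 : (cv3 a0 a1 a2) 2 0 = a2.
Proof. by rewrite mxE. Qed.

Lemma mx0E m n i j : (0 : 'M[T]_(m,n)) i j = 0.
Proof. by rewrite mxE. Qed.
Lemma addmxE m n (A B : 'M[T]_(m,n)) i j : (A + B) i j = A i j + B i j.
Proof. by rewrite mxE. Qed.
Lemma oppmxE m n (A : 'M[T]_(m,n)) i j : (- A) i j = - A i j.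
Proof. by rewrite mxE. Qed.
Lemma scalemxE m n a (A : 'M[T]_(m,n)) i j : (a *: A) i j = a * A i j.
Proof. by rewrite mxE. Qed.
Lemma trmxE m n (A : 'M[T]_(m,n)) i j : A^T i j = A j i.
Proof. by rewrite mxE. Qed.

Let mxE3s := (mk3_00, id3_00, mk3_01, id3_01, mk3_02, id3_02, mk3_10, id3_10, mk3_11, id3_11, mk3_12, id3_12, mk3_20, id3_20, mk3_21, id3_21, mk3_22, id3_22, cv3_0, cv3_1, cv3_2).
Lemma mk3_eta (M : 'M[T]_3) : M = mk3 (M 0 0) (M 0 1) (M 0 2) (M 1 0) (M 1 1) (M 1 2) (M 2 0) (M 2 1) (M 2 2).
Proof. by apply/matrixP; apply: forall3; apply: forall3; rewrite mxE3s. Qed.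
Lemma cv3_eta (v : 'cV[T]_3) : v = cv3 (v 0 0) (v 1 0) (v 2 0).
Proof. by apply/matrixP; apply: forall3; apply: forall1; rewrite mxE3s. Qed.
Lemma mulmx_mk3 a00 a01 a02 a10 a11 a12 a20 a21 a22 b00 b01 b02 b10 b11 b12 b20 b21 b22 : (mk3 a00 a01 a02 a10 a11 a12 a20 a21 a22) *m (mk3 b00 b01 b02 b10 b11 b12 b20 b21 b22) = mk3 (a00 * b00 + a01 * b10 + a02 * b20) (a00 * b01 + a01 * b11 + a02 * b21) (a00 * b02 + a01 * b12 + a02 * b22) (a10 * b00 + a11 * b10 + a12 * b20) (a10 * b01 + a11 * b11 + a12 * b21) (a10 * b02 + a11 * b12 + a12 * b22) (a20 * b00 + a21 * b10 + a22 * b20) (a20 * b01 + a21 * b11 + a22 * b21) (a20 * b02 + a21 * b12 + a22 * b22).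
Proof. by apply/matrixP; apply: forall3; apply: forall3; rewrite mulmx3E !mxE3s. Qed.
Lemma mulmx_mk3_cv3 a00 a01 a02 a10 a11 a12 a20 a21 a22 x0 x1 x2 : (mk3 a00 a01 a02 a10 a11 a12 a20 a21 a22) *m (cv3 x0 x1 x2) = cv3 (a00 * x0 + a01 * x1 + a02 * x2) (a10 * x0 + a11 * x1 + a12 * x2) (a20 * x0 + a21 * x1 + a22 * x2).
Proof. by apply/matrixP; apply: forall3; apply: forall1; rewrite mulmx3E !mxE3s. Qed.
Lemma trmx_mk3 a00 a01 a02 a10 a11 a12 a20 a21 a22 : (mk3 a00 a01 a02 a10 a11 a12 a20 a21 a22)^T = mk3 (a00) (a10) (a20) (a01) (a11) (a21) (a02) (a12) (a22).
Proof. by apply/matrixP; apply: forall3; apply: forall3; rewrite trmxE !mxE3s. Qed.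
Lemma addmx_mk3 a00 a01 a02 a10 a11 a12 a20 a21 a22 b00 b01 b02 b10 b11 b12 b20 b21 b22 : (mk3 a00 a01 a02 a10 a11 a12 a20 a21 a22) + (mk3 b00 b01 b02 b10 b11 b12 b20 b21 b22) = mk3 (a00 + b00) (a01 + b01) (a02 + b02) (a10 + b10) (a11 + b11) (a12 + b12) (a20 + b20) (a21 + b21) (a22 + b22).
Proof. by apply/matrixP; apply: forall3; apply: forall3; rewrite addmxE !mxE3s. Qed.
Lemma oppmx_mk3 a00 a01 a02 a10 a11 a12 a20 a21 a22 : - (mk3 a00 a01 a02 a10 a11 a12 a20 a21 a22) = mk3 (- a00) (- a01) (- a02) (- a10) (- a11) (- a12) (- a20) (- a21) (- a22).
Proof. by apply/matrixP; apply: forall3; apply: forall3; rewrite oppmxE !mxE3s. Qed.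
Lemma scalemx_mk3 c a00 a01 a02 a10 a11 a12 a20 a21 a22 : c *: (mk3 a00 a01 a02 a10 a11 a12 a20 a21 a22) = mk3 (c * a00) (c * a01) (c * a02) (c * a10) (c * a11) (c * a12) (c * a20) (c * a21) (c * a22).
Proof. by apply/matrixP; apply: forall3; apply: forall3; rewrite scalemxE !mxE3s. Qed.
Lemma addmx_cv3 x0 x1 x2 y0 y1 y2 : cv3 x0 x1 x2 + cv3 y0 y1 y2 = cv3 (x0 + y0) (x1 + y1) (x2 + y2).
Proof. by apply/matrixP; apply: forall3; apply: forall1; rewrite addmxE !mxE3s. Qed.
Lemma oppmx_cv3 x0 x1 x2 : - cv3 x0 x1 x2 = cv3 (- x0) (- x1) (- x2).
Proof. by apply/matrixP; apply: forall3; apply: forall1; rewrite oppmxE !mxE3s. Qed.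
Lemma scalemx_cv3 c x0 x1 x2 : c *: cv3 x0 x1 x2 = cv3 (c * x0) (c * x1) (c * x2).
Proof. by apply/matrixP; apply: forall3; apply: forall1; rewrite scalemxE !mxE3s. Qed.
Lemma gbil_cv3 x0 x1 x2 y0 y1 y2 : gbil (cv3 x0 x1 x2) (cv3 y0 y1 y2) = x0 * y0 + x1 * y1 + x2 * y2.
Proof. by rewrite gbilE !mxE3s. Qed.
Lemma det_mk3 a00 a01 a02 a10 a11 a12 a20 a21 a22 : \det (mk3 a00 a01 a02 a10 a11 a12 a20 a21 a22) = a00 * a11 * a22 - a00 * a12 * a21 - a01 * a10 * a22 + a01 * a12 * a20 + a02 * a10 * a21 - a02 * a11 * a20.
Proof. by rewrite det3 !mxE3s. Qed.
Lemma tr_mk3 a00 a01 a02 a10 a11 a12 a20 a21 a22 : \tr (mk3 a00 a01 a02 a10 a11 a12 a20 a21 a22) = a00 + a11 + a22.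
Proof. by rewrite tr3E !mxE3s. Qed.
Lemma id_mk3 : (1%:M : 'M[T]_3) = mk3 1 0 0 0 1 0 0 0 1.
Proof. by apply/matrixP; apply: forall3; apply: forall3; rewrite !mxE3s. Qed.
Lemma zero_cv3 : (0 : 'cV[T]_3) = cv3 0 0 0.
Proof. by apply/matrixP; apply: forall3; apply: forall1; rewrite mx0E !mxE3s. Qed.
Lemma cv3P x0 x1 x2 y0 y1 y2 : cv3 x0 x1 x2 = cv3 y0 y1 y2 -> [/\ x0 = y0, x1 = y1 & x2 = y2].
Proof. move=> e; have e0 := congr1 (fun v : 'cV[T]_3 => v 0 0) e; have e1 := congr1 (fun v : 'cV[T]_3 => v 1 0) e;
  have e2 := congr1 (fun v : 'cV[T]_3 => v 2 0) e; move: e0 e1 e2; rewrite !mxE3s; by []. Qed.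
End Gen.
Definition mxE3 := (mk3_00, id3_00, mk3_01, id3_01, mk3_02, id3_02, mk3_10, id3_10, mk3_11, id3_11, mk3_12, id3_12, mk3_20, id3_20, mk3_21, id3_21, mk3_22, id3_22, cv3_0, cv3_1, cv3_2).
Definition mk3simp := (mulmx_mk3, mulmx_mk3_cv3, trmx_mk3, addmx_mk3, oppmx_mk3, scalemx_mk3, addmx_cv3, oppmx_cv3, scalemx_cv3, gbil_cv3, det_mk3, tr_mk3).

Ltac mx3simp := rewrite ?(mxE3, mx0E, addmxE, oppmxE, scalemxE, trmxE, mulmx3E, sum3, big_ord1, mxE).
Ltac mx3cases := apply/matrixP; apply: forall3; (apply: forall3 || apply: forall1).

Section Morph.
Variables (T S : comNzRingType) (f : {rmorphism T -> S}).

Lemma gbil_map x y : f (gbil x y) = gbil (map_mx f x) (map_mx f y).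
Proof. rewrite /gbil rmorph_sum; apply: eq_bigr => a _; by rewrite rmorphM !mxE. Qed.

Lemma gpinv_map i v w M :
  f (gpinv i v w M) = gpinv i (map_mx f v) (map_mx f w) (map_mx f M).
Proof.
rewrite /gpinv; case: (val i) => [|[|[|[|?]]]]; rewrite ?gbil_map ?map_mxM //.
- by rewrite -trace_map_mx map_mxM map_trmx.
- by rewrite det_map_mx.
Qed.

Lemma gE1_map v w M :
  map_mx f (gE1 v w M) = gE1 (map_mx f v) (map_mx f w) (map_mx f M).
Proof. by rewrite /gE1 map_mxB !map_mxZ !gbil_map !map_mxM. Qed.

Lemma gE2_map v w M :
  map_mx f (gE2 v w M) = gE2 (map_mx f v) (map_mx f w) (map_mx f M).
Proof. by rewrite /gE2 map_mxB !map_mxZ !gbil_map !map_mxM map_trmx. Qed.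

Lemma gH_map v w M :
  f (gH v w M) = gH (map_mx f v) (map_mx f w) (map_mx f M).
Proof.
rewrite /gH; rewrite !(rmorphM, rmorphB, rmorphXn, rmorph_nat).
by rewrite !gpinv_map.
Qed.
End Morph.

Section Main.
Variable R : realType.
Local Notation C := (complex R).

Lemma pinvE i (x : pt R) : pinv i x = gpinv i (pv x) (pw x) (pC x).
Proof. by []. Qed.

Lemma bilE (x y : 'cV[C]_3) : bil x y = gbil x y.
Proof. by []. Qed.

Lemma SO3_mulTr (g : 'M[C]_3) : SO3 g -> g *m g^T = 1%:M.
Proof. by case=> H _; apply: mulmx1C. Qed.

Lemma SO3_unit (g : 'M[C]_3) : SO3 g -> g \in unitmx.
Proof. by case=> _ H; rewrite unitmxE H unitr1. Qed.

Lemma SO3_inv (g : 'M[C]_3) : SO3 g -> invmx g = g^T.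
Proof.
move=> H; have u := SO3_unit H.
by rewrite -[invmx g]mul1mx -(proj1 H) -mulmxA mulmxV // mulmx1.
Qed.

Lemma SO3_tr (g : 'M[C]_3) : SO3 g -> SO3 g^T.
Proof. by move=> H; split; [rewrite trmxK; exact: SO3_mulTr | rewrite det_tr; case: H]. Qed.

Lemma SO3_mul (g h : 'M[C]_3) : SO3 g -> SO3 h -> SO3 (g *m h).
Proof.
move=> [Hg dg] [Hh dh]; split; last by rewrite det_mulmx dg dh mulr1.
by rewrite trmx_mul -mulmxA (mulmxA g^T) Hg mul1mx Hh.
Qed.

Lemma act_SO (g : 'M[C]_3 * 'M[C]_3) (x : pt R) : inG g ->
  act g x = (g.1 *m pv x, g.2 *m pw x, g.2 *m pC x *m g.1^T).
Proof. by case=> H1 H2; rewrite /act SO3_inv. Qed.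

Lemma pinv_act (g : 'M[C]_3 * 'M[C]_3) (x : pt R) i : inG g -> pinv i (act g x) = pinv i x.
Proof.
move=> H; rewrite !pinvE act_SO //; case: H => [[H1 d1] [H2 d2]].
rewrite /gpinv /pv /pw /pC /=.
case: (val i) => [|[|[|[|?]]]].
- exact: gbil_orth.
- exact: gbil_orth.
- by rewrite -!mulmxA (mulmxA g.1^T) H1 mul1mx gbil_orth.
- rewrite !trmx_mul trmxK !mulmxA -(mulmxA _ g.2^T) H2 mulmx1 mxtrace_mulC.
  by rewrite !mulmxA H1 mul1mx.
- by rewrite (det_mulmx (g.2 *m x.2)) det_mulmx det_tr d1 d2 mul1r mulr1.
Qed.


Definition mX (i : nat) : {mpoly C[15]} := 'X_(inord i).
Definition mv : 'cV[{mpoly C[15]}]_3 := \col_(i < 3) mX i.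
Definition mw : 'cV[{mpoly C[15]}]_3 := \col_(i < 3) mX (3 + i).
Definition mC : 'M[{mpoly C[15]}]_3 := \matrix_(b < 3, a < 3) mX (6 + 3 * b + a).

Lemma meval_mv (x : pt R) : map_mx (meval (coords x)) mv = pv x.
Proof.
apply/matrixP=> i j; rewrite !mxE mevalXU /coords inordK; last by rewrite (ltn_trans (ltn_ord i)).
by rewrite ltn_ord inord_val (ord1E j).
Qed.

Lemma meval_mw (x : pt R) : map_mx (meval (coords x)) mw = pw x.
Proof.
apply/matrixP=> i j; rewrite !mxE mevalXU /coords inordK; last by case: i => [[|[|[|]]]].
rewrite ltnNge leq_addr /= ltn_add2l ltn_ord addKn inord_val.
by rewrite (ord1E j).
Qed.

Lemma meval_mC (x : pt R) : map_mx (meval (coords x)) mC = pC x.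
Proof.
apply/matrixP; apply: forall3; apply: forall3;
  rewrite !mxE mevalXU /coords inordK //= ; congr (pC x _ _); apply: val_inj; by rewrite /= inordK.
Qed.

Lemma meval_gpinv i (x : pt R) : meval (coords x) (gpinv i mv mw mC) = pinv i x.
Proof. by rewrite gpinv_map meval_mv meval_mw meval_mC. Qed.

Lemma meval_gH (x : pt R) : meval (coords x) (gH mv mw mC) = gH (pv x) (pw x) (pC x).
Proof. by rewrite gH_map meval_mv meval_mw meval_mC. Qed.

Lemma meval_gE1 (x : pt R) k : meval (coords x) (gE1 mv mw mC k 0) = gE1 (pv x) (pw x) (pC x) k 0.
Proof.
have := gE1_map (meval (coords x)) mv mw mC; rewrite meval_mv meval_mw meval_mC => <-.
by rewrite [RHS]mxE.
Qed.

Lemma meval_gE2 (x : pt R) k : meval (coords x) (gE2 mv mw mC k 0) = gE2 (pv x) (pw x) (pC x) k 0.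
Proof.
have := gE2_map (meval (coords x)) mv mw mC; rewrite meval_mv meval_mw meval_mC => <-.
by rewrite [RHS]mxE.
Qed.

End Main.

Section Main2.
Variable R : realType.
Local Notation C := (complex R).
Local Notation mv := (@mv R).
Local Notation mw := (@mw R).
Local Notation mC := (@mC R).
Lemma Z_closed : zariski_closed (fun x : pt R => gH (pv x) (pw x) (pC x) = 0).
Proof.
exists (fun p => p = gH mv mw mC) => x; split.
- by move=> H p ->; rewrite meval_gH.
- by move=> H; rewrite -meval_gH; apply: H.
Qed.

Definition Eq0 (x : pt R) := gE1 (pv x) (pw x) (pC x) = 0 /\ gE2 (pv x) (pw x) (pC x) = 0.

Lemma E_closed : zariski_closed Eq0.
Proof.
exists (fun p => exists k, p = gE1 mv mw mC k 0 \/ p = gE2 mv mw mC k 0) => x; split.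
- move=> [H1 H2] p [k [->|->]]; [by rewrite meval_gE1 H1 mx0E | by rewrite meval_gE2 H2 mx0E].
- move=> H; split; apply/matrixP=> k j; rewrite (ord1E j) mx0E.
  + by rewrite -meval_gE1; apply: H; exists k; left.
  + by rewrite -meval_gE2; apply: H; exists k; right.
Qed.

Lemma zclosure_sub (S : pt R -> Prop) x : S x -> zclosure S x.
Proof. by move=> Sx Z _ H; apply: H. Qed.

Lemma X0E (x : pt R) : X0 x ->
  [/\ pv x 0 0 = 0, pv x 1 0 = 0, pw x 0 0 = 0 & pw x 1 0 = 0] /\
  [/\ pC x 0 2 = 0, pC x 1 2 = 0, pC x 2 0 = 0 & pC x 2 1 = 0].
Proof.
move=> [h1 [h2 [h3 [h4 h5]]]]; split; first by [].
by split; apply: h5.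
Qed.

Lemma X0_Eq0 (x : pt R) : X0 x -> Eq0 x.
Proof.
move=> /X0E [[h1 h2 h3 h4] [h5 h6 h7 h8]].
split; apply/matrixP; apply: forall3; apply: forall1;
  rewrite /gE1 /gE2 !gbilE !mxE !sum3 ?mxE h1 h2 h3 h4 ?h5 ?h6 ?h7 ?h8; ring.
Qed.
Lemma gE1_act (g1 g2 : 'M[C]_3) v w M : g1^T *m g1 = 1%:M -> g2^T *m g2 = 1%:M ->
  gE1 (g1 *m v) (g2 *m w) (g2 *m M *m g1^T) = g2 *m gE1 v w M.
Proof.
move=> H1 H2; rewrite /gE1 -!mulmxA (mulmxA g1^T) H1 mul1mx !gbil_orth //.
by rewrite mulmxBr -!scalemxAr.
Qed.

Lemma gE2_act (g1 g2 : 'M[C]_3) v w M : g1^T *m g1 = 1%:M -> g2^T *m g2 = 1%:M ->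
  gE2 (g1 *m v) (g2 *m w) (g2 *m M *m g1^T) = g1 *m gE2 v w M.
Proof.
move=> H1 H2; rewrite /gE2 !trmx_mul trmxK -!mulmxA (mulmxA g2^T) H2 mul1mx.
rewrite (mulmxA g1^T) H1 mul1mx !gbil_orth //.
by rewrite mulmxBr -!scalemxAr.
Qed.

Lemma Eq0_act g (x : pt R) : inG g -> Eq0 x -> Eq0 (act g x).
Proof.
move=> H [e1 e2]; rewrite act_SO //; case: H => [[H1 _] [H2 _]]; rewrite /Eq0 /pv /pw /pC /=.
by rewrite gE1_act // gE2_act // -/(pv x) -/(pw x) -/(pC x) e1 e2 !mulmx0.
Qed.

Definition GX0 (y : pt R) := exists g x, inG g /\ X0 x /\ y = act g x.

Lemma X2_Eq0 (x : pt R) : X2 x -> Eq0 x.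
Proof.
move=> H; apply: H; first exact: E_closed.
by move=> y [g [x0 [Hg [Hx ->]]]]; apply: Eq0_act => //; apply: X0_Eq0.
Qed.

End Main2.

Section Main3.
Variable R : realType.
Local Notation C := (complex R).
Local Notation mv := (@mv R).
Local Notation mw := (@mw R).
Local Notation mC := (@mC R).
Lemma eq_mod (a b c d : C) : a - b = c * d -> d = 0 -> a = b.
Proof. by move=> h h0; apply/eqP; rewrite -subr_eq0 h h0 mulr0. Qed.

Lemma householder (u : 'cV[C]_3) k : k * gbil u u = 2%:R ->
  (1%:M - k *: (u *m u^T))^T *m (1%:M - k *: (u *m u^T)) = 1%:M.
Proof.
move=> hk; have hk0 : k * (u 0 0 * u 0 0 + u 1 0 * u 1 0 + u 2 0 * u 2 0) - 2%:R = 0.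
  by rewrite -gbilE hk subrr.
apply/matrixP => i j; apply: (eq_mod (c := k * u i 0 * u j 0) _ hk0).
move: i j; apply: forall3; apply: forall3; mx3simp; ring.
Qed.

Lemma normalize_vecA (v : 'cV[C]_3) s : s != 0 -> v 2 0 != s -> gbil v v = s ^+ 2 ->
  exists g, g^T *m g = 1%:M /\ g *m v = cv3 0 0 s.
Proof.
move=> hs hv hb.
pose u := v - cv3 0 0 s.
pose k := (s * (s - v 2 0))^-1.
have hd : s - v 2 0 != 0 by rewrite subr_eq0 eq_sym.
have hb0 : gbil v v - s ^+ 2 = 0 by rewrite hb subrr.
rewrite gbilE in hb0.
have hk : k * gbil u u = 2%:R.
  apply: (eq_mod (c := k) _ hb0).
  rewrite gbilE /u /k; mx3simp. field. by rewrite hs hd.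
exists (1%:M - k *: (u *m u^T)); split; first exact: householder.
apply/matrixP => i j; apply: (eq_mod (c := - k * u i 0) _ hb0).
move: i j; apply: forall3; apply: forall1; rewrite /u /k; mx3simp; field; by rewrite hs hd.
Qed.

Lemma orth_mul (g h : 'M[C]_3) : g^T *m g = 1%:M -> h^T *m h = 1%:M -> (g *m h)^T *m (g *m h) = 1%:M.
Proof. by move=> Hg Hh; rewrite trmx_mul -mulmxA (mulmxA g^T) Hg mul1mx Hh. Qed.

Lemma orth_det (g : 'M[C]_3) : g^T *m g = 1%:M -> \det g = 1 \/ \det g = -1.
Proof.
move=> H; have : \det g ^+ 2 == 1 by rewrite expr2 -{1}det_tr -det_mulmx H det1.
by rewrite sqrf_eq1 => /orP [/eqP ->|/eqP ->]; [left|right].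
Qed.

Lemma normalize_vec0 (v : 'cV[C]_3) s : s != 0 -> gbil v v = s ^+ 2 ->
  exists g, g^T *m g = 1%:M /\ g *m v = cv3 0 0 s.
Proof.
move=> hs hb; have [e|ne] := eqVneq (v 2 0) s; last exact: normalize_vecA.
have [|||g [Hg Hgv]] := @normalize_vecA v (- s).
- by rewrite oppr_eq0.
- by rewrite e eq_sym eqNr.
- by rewrite sqrrN.
pose F := mk3 1 0 0 0 (-1) 0 0 0 (-1 : C).
exists (F *m g); split.
  apply: orth_mul => //; mx3cases; mx3simp; ring.
rewrite -mulmxA Hgv; mx3cases; mx3simp; ring.
Qed.

Lemma normalize_vec (v : 'cV[C]_3) s : s != 0 -> gbil v v = s ^+ 2 ->
  exists g, SO3 g /\ g *m v = cv3 0 0 s.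
Proof.
move=> hs hb; have [g [Hg Hgv]] := normalize_vec0 hs hb.
have [d1|d1] := orth_det Hg; first by exists g.
pose D := mk3 (-1) 0 0 0 1 0 0 0 (1 : C).
exists (D *m g); split; first split.
- apply: orth_mul => //; mx3cases; mx3simp; ring.
- rewrite det_mulmx d1 det3; mx3simp; ring.
- rewrite -mulmxA Hgv; mx3cases; mx3simp; ring.
Qed.

Lemma X0I (x : pt R) : pv x 0 0 = 0 -> pv x 1 0 = 0 -> pw x 0 0 = 0 -> pw x 1 0 = 0 ->
  pC x 0 2 = 0 -> pC x 1 2 = 0 -> pC x 2 0 = 0 -> pC x 2 1 = 0 -> X0 x.
Proof.
move=> h1 h2 h3 h4 h5 h6 h7 h8; do 4! split => //.
by apply: forall3; apply: forall3.
Qed.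

Lemma pvE (a b : 'cV[C]_3) (M : 'M[C]_3) : pv (a, b, M) = a. Proof. by []. Qed.
Lemma pwE (a b : 'cV[C]_3) (M : 'M[C]_3) : pw (a, b, M) = b. Proof. by []. Qed.
Lemma pCE (a b : 'cV[C]_3) (M : 'M[C]_3) : pC (a, b, M) = M. Proof. by []. Qed.

Lemma eq0_of (a k e : C) : k != 0 -> a * k = e -> e = 0 -> a = 0.
Proof. by move=> hk h he; move: h; rewrite he => /eqP; rewrite mulf_eq0 (negbTE hk) orbF => /eqP. Qed.

Lemma block_of_E (s r : C) (M : 'M[C]_3) : s != 0 -> r != 0 ->
  gE1 (cv3 0 0 s) (cv3 0 0 r) M = 0 -> gE2 (cv3 0 0 s) (cv3 0 0 r) M = 0 ->
  [/\ M 0 2 = 0, M 1 2 = 0, M 2 0 = 0 & M 2 1 = 0].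
Proof.
move=> hs hr; rewrite (mk3_eta M) /gE1 /gE2 zero_cv3.
rewrite !mk3simp.
case/cv3P => c1 c2 _; case/cv3P => c3 c4 _.
have nz : r * r * s != 0 by rewrite !mulf_neq0.
have nz' : s * s * r != 0 by rewrite !mulf_neq0.
split.
- by apply: (eq0_of nz _ c1); rewrite !mxE3; ring.
- by apply: (eq0_of nz _ c2); rewrite !mxE3; ring.
- by apply: (eq0_of nz' _ c3); rewrite !mxE3; ring.
- by apply: (eq0_of nz' _ c4); rewrite !mxE3; ring.
Qed.

Lemma reduce (x : pt R) : Eq0 x -> gbil (pv x) (pv x) != 0 -> gbil (pw x) (pw x) != 0 ->
  exists g, inG g /\ X0 (act g x) /\
    pv (act g x) = cv3 0 0 (sqrtc (gbil (pv x) (pv x))) /\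
    pw (act g x) = cv3 0 0 (sqrtc (gbil (pw x) (pw x))).
Proof.
move=> HE hv hw.
set s := sqrtc (gbil (pv x) (pv x)); set r := sqrtc (gbil (pw x) (pw x)).
have hs : s != 0 by rewrite sqrtc_eq0.
have hr : r != 0 by rewrite sqrtc_eq0.
have [g1 [H1 e1]] := normalize_vec hs (esym (sqr_sqrtc _)).
have [g2 [H2 e2]] := normalize_vec hr (esym (sqr_sqrtc _)).
have HG : inG (g1, g2) by [].
have [E1 E2] := Eq0_act HG HE.
exists (g1, g2); split => //.
move: E1 E2; rewrite act_SO // /Eq0 !pvE !pwE !pCE e1 e2 => E1 E2.
have [h5 h6 h7 h8] := block_of_E hs hr E1 E2.
split => //; apply: X0I; rewrite ?pvE ?pwE ?pCE ?e1 ?e2 ?mxE3 //.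
Qed.

End Main3.

Section Main4.
Variable R : realType.
Local Notation C := (complex R).
Local Notation mv := (@mv R).
Local Notation mw := (@mw R).
Local Notation mC := (@mC R).
Lemma rot2_map (u0 u1 v0 v1 : C) : u0 ^+ 2 + u1 ^+ 2 = v0 ^+ 2 + v1 ^+ 2 ->
  u0 ^+ 2 + u1 ^+ 2 != 0 ->
  exists p q, p ^+ 2 + q ^+ 2 = 1 /\ p * u0 - q * u1 = v0 /\ q * u0 + p * u1 = v1.
Proof.
move=> e hn.
have e0 : v0 ^+ 2 + v1 ^+ 2 - (u0 ^+ 2 + u1 ^+ 2) = 0 by rewrite e subrr.
exists ((u0 * v0 + u1 * v1) / (u0 ^+ 2 + u1 ^+ 2)), ((u0 * v1 - u1 * v0) / (u0 ^+ 2 + u1 ^+ 2)).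
split; last split.
- apply: (eq_mod (c := (u0 ^+ 2 + u1 ^+ 2)^-1) _ e0); field; exact: hn.
- field; exact: hn.
- field; exact: hn.
Qed.

Lemma half_rot (p q : C) : p ^+ 2 + q ^+ 2 = 1 ->
  exists a b, a ^+ 2 + b ^+ 2 = 1 /\ a ^+ 2 - b ^+ 2 = p /\ 2%:R * a * b = q.
Proof.
move=> hpq; have h0 : p ^+ 2 + q ^+ 2 - 1 = 0 by rewrite hpq subrr.
have [e|ne] := eqVneq p (-1).
  have hq : q = 0.
    have : q ^+ 2 = 0 by apply: (eq_mod (c := 1) _ h0); rewrite e; ring.
    by move/eqP; rewrite expf_eq0 /= => /eqP.
  by exists 0, 1; rewrite e hq; split; [|split]; ring.
have hp1 : 1 + p != 0 by rewrite addrC -(subr_eq0 p (-1)) opprK in ne *.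
pose a := sqrtc ((1 + p) / 2%:R).
have ha : a ^+ 2 = (1 + p) / 2%:R by rewrite sqr_sqrtc.
have h2 : (2%:R : C) != 0 by rewrite pnatr_eq0.
exists a, (q * a / (1 + p)).
have -> : (q * a / (1 + p)) ^+ 2 = q ^+ 2 * a ^+ 2 / (1 + p) ^+ 2.
  by rewrite !exprMn exprVn.
have -> : 2%:R * a * (q * a / (1 + p)) = 2%:R * q * a ^+ 2 / (1 + p).
  by rewrite expr2; field.
rewrite ha; split; last split.
- apply: (eq_mod (c := (2%:R * (1 + p))^-1) _ h0); field; by rewrite ?hp1 ?h2.
- apply: (eq_mod (c := - (2%:R * (1 + p))^-1) _ h0); field; by rewrite ?hp1 ?h2.
- field; by rewrite ?hp1 ?h2.
Qed.

Definition rot3 (p q : C) : 'M[C]_3 := mk3 p (- q) 0 q p 0 0 0 1.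

Lemma SO3_rot3 p q : p ^+ 2 + q ^+ 2 = 1 -> SO3 (rot3 p q).
Proof.
move=> h; have h0 : p ^+ 2 + q ^+ 2 - 1 = 0 by rewrite h subrr.
split; rewrite /rot3 ?id_mk3 !mk3simp.
- congr mk3; first [ring | by apply: (eq_mod (c := 1) _ h0); ring].
- by apply: (eq_mod (c := 1) _ h0); ring.
Qed.

Lemma block_match (x00 x01 x10 x11 y00 y01 y10 y11 c : C) :
  (x00 + x11) ^+ 2 + (x10 - x01) ^+ 2 = (y00 + y11) ^+ 2 + (y10 - y01) ^+ 2 ->
  (x00 + x11) ^+ 2 + (x10 - x01) ^+ 2 != 0 ->
  (x00 - x11) ^+ 2 + (x10 + x01) ^+ 2 = (y00 - y11) ^+ 2 + (y10 + y01) ^+ 2 ->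
  (x00 - x11) ^+ 2 + (x10 + x01) ^+ 2 != 0 ->
  exists pa qa pb qb, pa ^+ 2 + qa ^+ 2 = 1 /\ pb ^+ 2 + qb ^+ 2 = 1 /\
    rot3 pb qb *m mk3 x00 x01 0 x10 x11 0 0 0 c *m (rot3 pa qa)^T =
    mk3 y00 y01 0 y10 y11 0 0 0 c.
Proof.
move=> eu nu ew nw.
have [pf [qf [hf [hu0 hu1]]]] := rot2_map eu nu.
have [ps [qs [hs [hw0 hw1]]]] := rot2_map ew nw.
have hPQ : (pf * ps - qf * qs) ^+ 2 + (pf * qs + qf * ps) ^+ 2 = 1.
  have -> : (pf * ps - qf * qs) ^+ 2 + (pf * qs + qf * ps) ^+ 2 =
    (pf ^+ 2 + qf ^+ 2) * (ps ^+ 2 + qs ^+ 2) by ring.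
  by rewrite hf hs mulr1.
have [pb [qb [hb [hP hQ]]]] := half_rot hPQ.
have hf0 : pf ^+ 2 + qf ^+ 2 - 1 = 0 by rewrite hf subrr.
have hb0 : pb ^+ 2 + qb ^+ 2 - 1 = 0 by rewrite hb subrr.
have hps : ps = pf * (pb ^+ 2 - qb ^+ 2) + qf * (2%:R * pb * qb).
  by rewrite hP hQ; apply: (eq_mod (c := - ps) _ hf0); ring.
have hqs : qs = pf * (2%:R * pb * qb) - qf * (pb ^+ 2 - qb ^+ 2).
  by rewrite hP hQ; apply: (eq_mod (c := - qs) _ hf0); ring.
have h2 : (2%:R : C) != 0 by rewrite pnatr_eq0.
have hy00 : y00 = ((pf * (x00 + x11) - qf * (x10 - x01)) + (ps * (x00 - x11) - qs * (x10 + x01))) / 2%:R.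
  by rewrite hu0 hw0; field.
have hy11 : y11 = ((pf * (x00 + x11) - qf * (x10 - x01)) - (ps * (x00 - x11) - qs * (x10 + x01))) / 2%:R.
  by rewrite hu0 hw0; field.
have hy10 : y10 = ((qf * (x00 + x11) + pf * (x10 - x01)) + (qs * (x00 - x11) + ps * (x10 + x01))) / 2%:R.
  by rewrite hu1 hw1; field.
have hy01 : y01 = ((qs * (x00 - x11) + ps * (x10 + x01)) - (qf * (x00 + x11) + pf * (x10 - x01))) / 2%:R.
  by rewrite hu1 hw1; field.
exists (pb * pf + qb * qf), (qb * pf - pb * qf), pb, qb; split; last split => //.
  have -> : (pb * pf + qb * qf) ^+ 2 + (qb * pf - pb * qf) ^+ 2 =
    (pb ^+ 2 + qb ^+ 2) * (pf ^+ 2 + qf ^+ 2) by ring.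
  by rewrite hb hf mulr1.
rewrite /rot3 !mk3simp hy00 hy11 hy10 hy01 hps hqs; congr mk3; try ring.
- by apply: (eq_mod (c := (pf * (x00 + x11) - qf * (x10 - x01)) / 2%:R) _ hb0); field.
- by apply: (eq_mod (c := - (qf * (x00 + x11) + pf * (x10 - x01)) / 2%:R) _ hb0); field.
- by apply: (eq_mod (c := (qf * (x00 + x11) + pf * (x10 - x01)) / 2%:R) _ hb0); field.
- by apply: (eq_mod (c := (pf * (x00 + x11) - qf * (x10 - x01)) / 2%:R) _ hb0); field.
Qed.

Lemma neq0_mulP (a b : C) : a * b != 0 -> a != 0 /\ b != 0.
Proof. by rewrite mulf_eq0 negb_or => /andP. Qed.

Lemma pt_eta (y : pt R) : y = (pv y, pw y, pC y).
Proof. by case: y => [[]]. Qed.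

Lemma X0_sep (y1 y2 : pt R) (s r : C) : s != 0 -> r != 0 -> X0 y1 -> X0 y2 ->
  pv y1 = cv3 0 0 s -> pv y2 = cv3 0 0 s -> pw y1 = cv3 0 0 r -> pw y2 = cv3 0 0 r ->
  (forall i, pinv i y1 = pinv i y2) -> gH (pv y1) (pw y1) (pC y1) != 0 ->
  exists g, inG g /\ act g y1 = y2.
Proof.
move=> hs hr /X0E [_ [a5 a6 a7 a8]] /X0E [_ [b5 b6 b7 b8]] v1 v2 w1 w2 hp hH.
have hM1 : pC y1 = mk3 (pC y1 0 0) (pC y1 0 1) 0 (pC y1 1 0) (pC y1 1 1) 0 0 0 (pC y1 2 2).
  by rewrite {1}(mk3_eta (pC y1)) a5 a6 a7 a8.
have hM2 : pC y2 = mk3 (pC y2 0 0) (pC y2 0 1) 0 (pC y2 1 0) (pC y2 1 1) 0 0 0 (pC y2 2 2).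
  by rewrite {1}(mk3_eta (pC y2)) b5 b6 b7 b8.
move: hH hp; rewrite (pt_eta y2) (pt_eta y1) v1 v2 w1 w2 hM1 hM2.
set x00 := pC y1 0 0; set x01 := pC y1 0 1; set x10 := pC y1 1 0; set x11 := pC y1 1 1.
set c1 := pC y1 2 2.
set z00 := pC y2 0 0; set z01 := pC y2 0 1; set z10 := pC y2 1 0; set z11 := pC y2 1 1.
set c2 := pC y2 2 2.
move=> hH hp.
have e2 := hp 2; have e3 := hp 3; have e4 := hp 4.
rewrite !pinvE /gpinv /= ?pvE ?pwE ?pCE !mk3simp in e2 e3 e4.
rewrite /gH /gpinv /= !mk3simp in hH.
have hsr : s * r != 0 by rewrite mulf_neq0.
have hc : c1 = c2.
  by apply: (mulIf hsr); apply: (etrans _ (etrans e2 _)); ring.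
rewrite -{}hc in e3 e4 hp *.
have hH' : c1 ^+ 3 * (s * r) ^+ 9 *
   (((x00 + x11) ^+ 2 + (x10 - x01) ^+ 2) * ((x00 - x11) ^+ 2 + (x10 + x01) ^+ 2)) != 0.
  by move: hH; apply: contra_neq => h; apply: (etrans _ h); ring.
have [h1 /neq0_mulP [nu nw]] := neq0_mulP hH'.
have [/neq0_mulP [h3 _] _] := neq0_mulP h1.
have hc1 : c1 != 0 := h3.
have eT : x00 ^+ 2 + x01 ^+ 2 + x10 ^+ 2 + x11 ^+ 2 = z00 ^+ 2 + z01 ^+ 2 + z10 ^+ 2 + z11 ^+ 2.
  apply: (addIr (c1 * c1)); apply: (etrans _ (etrans e3 _)); ring.
have ed : x00 * x11 - x01 * x10 = z00 * z11 - z01 * z10.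
  apply: (mulIf hc1); apply: (etrans _ (etrans e4 _)); ring.
have eu : (x00 + x11) ^+ 2 + (x10 - x01) ^+ 2 = (z00 + z11) ^+ 2 + (z10 - z01) ^+ 2.
  have -> : (x00 + x11) ^+ 2 + (x10 - x01) ^+ 2 =
    (x00 ^+ 2 + x01 ^+ 2 + x10 ^+ 2 + x11 ^+ 2) + 2%:R * (x00 * x11 - x01 * x10) by ring.
  by rewrite eT ed; ring.
have ew : (x00 - x11) ^+ 2 + (x10 + x01) ^+ 2 = (z00 - z11) ^+ 2 + (z10 + z01) ^+ 2.
  have -> : (x00 - x11) ^+ 2 + (x10 + x01) ^+ 2 =
    (x00 ^+ 2 + x01 ^+ 2 + x10 ^+ 2 + x11 ^+ 2) - 2%:R * (x00 * x11 - x01 * x10) by ring.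
  by rewrite eT ed; ring.
have [pa [qa [pb [qb [ha [hb eM]]]]]] := block_match c1 eu nu ew nw.
have Hg : inG (rot3 pa qa, rot3 pb qb) by split; apply: SO3_rot3.
exists (rot3 pa qa, rot3 pb qb); split => //.
rewrite act_SO // !pvE !pwE !pCE eM.
by rewrite /rot3 !mk3simp; congr (_, _, _); congr cv3; ring.
Qed.

Lemma inG_mul (g h : 'M[C]_3 * 'M[C]_3) : inG g -> inG h -> inG (g.1 *m h.1, g.2 *m h.2).
Proof. by case=> [? ?] [? ?]; split; apply: SO3_mul. Qed.

Lemma inG_tr (g : 'M[C]_3 * 'M[C]_3) : inG g -> inG (g.1^T, g.2^T).
Proof. by case=> [? ?]; split; apply: SO3_tr. Qed.

Lemma act_comp (g h : 'M[C]_3 * 'M[C]_3) (x : pt R) : inG g -> inG h ->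
  act g (act h x) = act (g.1 *m h.1, g.2 *m h.2) x.
Proof.
move=> Hg Hh; rewrite (act_SO _ Hg) (act_SO _ Hh) (act_SO _ (inG_mul Hg Hh)).
by rewrite !pvE !pwE !pCE !mulmxA trmx_mul !mulmxA.
Qed.

Lemma act_inv (g : 'M[C]_3 * 'M[C]_3) (x : pt R) : inG g -> act (g.1^T, g.2^T) (act g x) = x.
Proof.
move=> Hg; rewrite act_comp //; last exact: inG_tr.
case: Hg => [[H1 _] [H2 _]]; rewrite H1 H2 /act invmx1.
by rewrite !mul1mx mulmx1 [RHS]pt_eta.
Qed.

Definition Hx (x : pt R) := gH (pv x) (pw x) (pC x).

Lemma Hx_act g (x : pt R) : inG g -> Hx (act g x) = Hx x.
Proof. by move=> Hg; rewrite /Hx /gH -!pinvE !pinv_act. Qed.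

Lemma Hx_nz (x : pt R) : Hx x != 0 ->
  gbil (pv x) (pv x) != 0 /\ gbil (pw x) (pw x) != 0.
Proof.
rewrite /Hx /gH => /neq0_mulP [/neq0_mulP [/neq0_mulP [h0 h1] _] _].
by split.
Qed.

Lemma Hx_pinv (x y : pt R) : (forall i, pinv i x = pinv i y) -> Hx x = Hx y.
Proof. by move=> h; rewrite /Hx /gH -!pinvE !h. Qed.

Lemma sep (x1 x2 : pt R) : Eq0 x1 -> Eq0 x2 -> Hx x1 != 0 -> Hx x2 != 0 ->
  (forall i, pinv i x1 = pinv i x2) -> exists g, inG g /\ act g x1 = x2.
Proof.
move=> E1 E2 H1 H2 hp.
have [n1 m1] := Hx_nz H1; have [n2 m2] := Hx_nz H2.
have [g [Hg [X1 [v1 w1]]]] := reduce E1 n1 m1.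
have [k [Hk [X2' [v2 w2]]]] := reduce E2 n2 m2.
have e0 : gbil (pv x1) (pv x1) = gbil (pv x2) (pv x2) by apply: (hp 0).
have e1 : gbil (pw x1) (pw x1) = gbil (pw x2) (pw x2) by apply: (hp 1).
rewrite -e0 -e1 in v2 w2.
have hp' : forall i, pinv i (act g x1) = pinv i (act k x2).
  by move=> i; rewrite !pinv_act.
have hs : sqrtc (gbil (pv x1) (pv x1)) != 0 by rewrite sqrtc_eq0.
have hr : sqrtc (gbil (pw x1) (pw x1)) != 0 by rewrite sqrtc_eq0.
have HH : Hx (act g x1) != 0 by rewrite Hx_act.
have [h [Hh eh]] := X0_sep hs hr X1 X2' v1 v2 w1 w2 hp' HH.
exists ((k.1^T *m h.1) *m g.1, (k.2^T *m h.2) *m g.2); split.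
  exact: (inG_mul (inG_mul (inG_tr Hk) Hh) Hg).
rewrite -(act_inv x2 Hk) -eh.
by rewrite (act_comp _ (inG_tr Hk) Hh) (act_comp _ (inG_mul (inG_tr Hk) Hh) Hg).
Qed.

End Main4.

Section Main5.
Variable R : realType.
Local Notation C := (complex R).
Local Notation mv := (@mv R).
Local Notation mw := (@mw R).
Local Notation mC := (@mC R).
Lemma poly_zero (P : {poly C}) : (forall t, P.[t] = 0) -> P = 0.
Proof.
move=> h; apply/eqP; apply/negPn/negP => nz.
have hr : all (root P) [seq i%:R | i <- iota 0 (size P)].
  by apply/allP => t _; apply/rootP/h.
have hu : uniq [seq (i%:R : C) | i <- iota 0 (size P)].
  by rewrite map_inj_uniq ?iota_uniq // => m n /eqP; rewrite eqr_nat => /eqP.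
by have := max_poly_roots nz hr hu; rewrite size_map size_iota ltnn.
Qed.

Lemma mmap_horner (p : {mpoly C[15]}) (h : 'I_15 -> {poly C}) t :
  (mmap polyC h p).[t] = meval (fun i => (h i).[t]) p.
Proof.
rewrite /mmap mevalE horner_sum; apply: eq_bigr => m _.
rewrite hornerM hornerC /mmap1 horner_prod; congr (_ * _).
by apply: eq_bigr => i _; rewrite horner_exp.
Qed.

Lemma iprod (t a b : C) : (t + (a + 'i%C * b)) * (t + (a - 'i%C * b)) = (t + a) ^+ 2 + b ^+ 2.
Proof.
have -> : (t + (a + 'i%C * b)) * (t + (a - 'i%C * b)) = (t + a) ^+ 2 - 'i%C ^+ 2 * b ^+ 2 by ring.
by rewrite sqr_i; ring.
Qed.

Lemma XaddC_neq0 (c : C) : 'X + c%:P != 0.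
Proof. by rewrite -size_poly_eq0 size_XaddC. Qed.

Lemma Hx_X0 (y : pt R) : X0 y ->
  Hx y = (pC y 2 2) ^+ 3 * (pv y 2 0 * pw y 2 0) ^+ 9 *
    (((pC y 0 0 + pC y 1 1) ^+ 2 + (pC y 1 0 - pC y 0 1) ^+ 2) *
     ((pC y 0 0 - pC y 1 1) ^+ 2 + (pC y 1 0 + pC y 0 1) ^+ 2)).
Proof.
move=> /X0E [[h1 h2 h3 h4] [h5 h6 h7 h8]].
rewrite /Hx (cv3_eta (pv y)) (cv3_eta (pw y)) {1}(mk3_eta (pC y)) h1 h2 h3 h4 h5 h6 h7 h8.
rewrite /gH /gpinv /= !mk3simp !mxE3; ring.
Qed.

Definition ev : 'cV[C]_3 := cv3 0 0 1.
Definition eM : 'M[C]_3 := mk3 1 0 0 0 0 0 0 0 1.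
Definition ept : pt R := (ev, ev, eM).
Definition xt (x0 : pt R) (t : C) : pt R :=
  (pv x0 + t *: ev, pw x0 + t *: ev, pC x0 + t *: eM).

Lemma X0_xt x0 t : X0 x0 -> X0 (xt x0 t).
Proof.
move=> /X0E [[h1 h2 h3 h4] [h5 h6 h7 h8]].
by apply: X0I; rewrite /xt ?pvE ?pwE ?pCE addmxE scalemxE /ev /eM !mxE3 ?h1 ?h2 ?h3 ?h4 ?h5 ?h6 ?h7 ?h8 mulr0 addr0.
Qed.

Definition Qpoly (x0 : pt R) : {poly C} :=
  let x00 := pC x0 0 0 in let x01 := pC x0 0 1 in
  let x10 := pC x0 1 0 in let x11 := pC x0 1 1 in
  ('X + (pC x0 2 2)%:P) ^+ 3 * (('X + (pv x0 2 0)%:P) * ('X + (pw x0 2 0)%:P)) ^+ 9 *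
  ((('X + ((x00 + x11) + 'i%C * (x10 - x01))%:P) * ('X + ((x00 + x11) - 'i%C * (x10 - x01))%:P)) *
   (('X + ((x00 - x11) + 'i%C * (x10 + x01))%:P) * ('X + ((x00 - x11) - 'i%C * (x10 + x01))%:P))).

Lemma Qpoly_neq0 x0 : Qpoly x0 != 0.
Proof. by rewrite /Qpoly !mulf_neq0 ?expf_neq0 ?XaddC_neq0. Qed.

Lemma Hx_xt x0 t : X0 x0 -> Hx (xt x0 t) = (Qpoly x0).[t].
Proof.
move=> h; rewrite (Hx_X0 (X0_xt t h)) /Qpoly !(hornerM, horner_exp, hornerD, hornerX, hornerC) !iprod.
rewrite /xt ?pvE ?pwE ?pCE !addmxE !scalemxE /ev /eM !mxE3; ring.
Qed.

Lemma coords_lin (y z : pt R) t i :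
  coords (pv y + t *: pv z, pw y + t *: pw z, pC y + t *: pC z) i = coords y i + t * coords z i.
Proof.
rewrite /coords; case: ifP => _; first by rewrite pvE addmxE scalemxE.
by case: ifP => _; rewrite ?pwE ?pCE addmxE scalemxE.
Qed.

Lemma act_xt g x0 t : inG g ->
  act g (xt x0 t) = (pv (act g x0) + t *: pv (act g ept),
                     pw (act g x0) + t *: pw (act g ept),
                     pC (act g x0) + t *: pC (act g ept)).
Proof.
move=> Hg; rewrite !act_SO // /xt !pvE !pwE !pCE.
by rewrite !mulmxDr !mulmxDl -!scalemxAr -!scalemxAl.
Qed.

Lemma density (x : pt R) : X2 x ->
  zclosure (fun y => X2 y /\ ~ (gH (pv y) (pw y) (pC y) = 0)) x.
Proof.
move=> HX W [P HP] HW; apply: HX; first by exists P.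
move=> _ [g [x0 [Hg [Hx0 ->]]]]; apply/HP => p Pp.
pose a := coords (act g x0); pose b := coords (act g ept).
pose F := mmap polyC (fun i => (a i)%:P + (b i)%:P * 'X) p.
have hF : forall t, F.[t] = meval (coords (act g (xt x0 t))) p.
  move=> t; rewrite mmap_horner; apply: meval_eq => i.
  by rewrite act_xt // coords_lin hornerD hornerC hornerCM hornerX mulrC.
have hFt : forall t, (Qpoly x0).[t] != 0 -> F.[t] = 0.
  move=> t hq; rewrite hF; apply: ((HP _).1 _ p Pp); apply: HW; split.
    by apply: zclosure_sub; exists g, (xt x0 t); split => //; split => //; apply: X0_xt.
  by rewrite -/(Hx _) Hx_act // Hx_xt //; apply/eqP.
have : F * Qpoly x0 = 0.
  apply: poly_zero => t; rewrite hornerM; have [->|hq] := eqVneq (Qpoly x0).[t] 0.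
    by rewrite mulr0.
  by rewrite hFt // mul0r.
move/eqP; rewrite mulf_eq0 (negbTE (Qpoly_neq0 x0)) orbF => /eqP F0.
have := congr1 (fun q => q.[0]) F0; rewrite /= mmap_horner horner0 => <-.
by apply: meval_eq => i; rewrite hornerD hornerC hornerCM hornerX mulr0 addr0.
Qed.

End Main5.

Theorem propositionB6 (R : realType) :
  G_invariant_on (@pinv R) (@X2 R) /\ separates_orbits_gp (@pinv R) (@X2 R).
Proof.
split.
- by move=> g x i Hg _; apply: pinv_act.
- exists (fun y : pt R => gH (pv y) (pw y) (pC y) = 0); split; first exact: Z_closed.
  split; first exact: density.
  move=> x1 x2 X1 Z1 X2' Z2 hp.
  apply: sep => //; [exact: X2_Eq0 | exact: X2_Eq0 | exact/eqP | exact/eqP].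
Qed.
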